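(* Let $r,M$ be positive integers with $M\ge2$, and let $\mathcal C=\{0,\dots,M-1\}^r\subset\mathbb Z^r$. Let $\tau=\tau_M$ be the (positive) solution of $$\left(\frac1M\right)^{2\tau}+\left(\frac{M-1}{M}\right)^{\tau}=1.$$ Then for any subsets $A,B\subset\mathcal C$ we have $|A+B|\ge(|A||B|)^\tau$.
   Context: $A+B=\{a+b: a\in A, b\in B\}$, computed in $\mathbb Z^r$. *)

(* Defs.v *)
From HB Require Import structures.
From mathcomp Require Import all_boot all_order all_algebra finmap.
From mathcomp Require Import reals exp.
Set Implicit Arguments. Unset Strict Implicit. Unset Printing Implicit Defensive.
Import Order.TTheory GRing.Theory Num.Theory.
Local Open Scope ring_scope.

Definition cube (r M : nat) : pred 'rV[int]_r :=
  fun v => [forall i : 'I_r, (0 <= v ord0 i) && (v ord0 i < M%:Z)].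

Definition sumset (r : nat) (A B : {fset 'rV[int]_r}) : {fset 'rV[int]_r} :=
  [fset (a + b)%R | a in A, b in B]%fset.
Arguments cube r M v : clear implicits.

(* Main.v *)
Require Import Defs.
From HB Require Import structures.
From mathcomp Require Import all_boot all_order all_algebra finmap.
From mathcomp Require Import reals exp.
From mathcomp Require Import all_classical all_reals all_analysis.
From mathcomp Require Import ring lra zify.
Set Implicit Arguments. Unset Strict Implicit. Unset Printing Implicit Defensive.
Import Order.TTheory GRing.Theory Num.Theory.
Local Open Scope ring_scope.

Section R.
Variable R : realType.

Lemma ln_concave (l a b : R) : 0 < a -> 0 < b -> 0 <= l <= 1 ->
  l * ln a + (1 - l) * ln b <= ln (l * a + (1 - l) * b).
Proof.
move=> a0 b0 /andP[l0 l1].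
set z := l * a + (1 - l) * b.
have z0 : 0 < z.
  rewrite /z; case: (ltrgt0P l) l0 => // [lpos|->] _; last by rewrite mul0r add0r subr0 mul1r.
  by rewrite ltr_pwDl // ?mulr_gt0 // mulr_ge0 // ?subr_ge0 // ltW.
have Ha : ln a - ln z <= a / z - 1.
  rewrite -ln_div ?posrE //.
  have := @le_ln1Dx R (a / z - 1); rewrite addrCA subrr addr0; apply.
  by have := divr_gt0 a0 z0; lra.
have Hb : ln b - ln z <= b / z - 1.
  rewrite -ln_div ?posrE //.
  have := @le_ln1Dx R (b / z - 1); rewrite addrCA subrr addr0; apply.
  by have := divr_gt0 b0 z0; lra.
have E : l * (a / z - 1) + (1 - l) * (b / z - 1) = 0.
  have -> : l * (a / z - 1) + (1 - l) * (b / z - 1) = (l * a + (1 - l) * b) / z - 1.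
    by ring.
  by rewrite -/z divff ?subrr // gt_eqF.
rewrite -subr_ge0.
have : l * (ln a - ln z) + (1 - l) * (ln b - ln z) <= 0.
  rewrite -E lerD // ler_wpM2l // subr_ge0 //.
by rewrite -subr_ge0 => H; apply: le_trans H _; rewrite le_eqVlt; apply/orP; left; apply/eqP; ring.
Qed.


Lemma bern (t d : R) : 0 <= t <= 1 -> 0 <= d < 1 -> (1 - d) `^ t <= 1 - t * d.
Proof.
move=> /andP[t0 t1] /andP[d0 d1].
have d1' : 0 < 1 - d by rewrite subr_gt0.
have td : 0 < 1 - t * d.
  have : t * d <= d by rewrite ler_piMl.
  lra.
have := @ln_concave t (1 - d) 1 d1' ltr01 (ltac:(by rewrite t0 t1)).
rewrite ln1 mulr0 addr0 => H.
rewrite /powR gt_eqF // -[X in _ <= X]lnK ?posrE // ler_expR.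
apply: le_trans H _; rewrite le_eqVlt; apply/orP; left; apply/eqP.
congr ln; ring.
Qed.

Definition gg (t : R) (m : R) := m `^ (2 * t) + (1 - m) `^ t.
Definition dgg (t m : R) := 2 * t * m `^ (2 * t - 1) + t * (1 - m) `^ (t - 1) * (-1).

Lemma gg_derive (t m : R) : 0 < m < 1 -> is_derive m 1 (gg t) (dgg t m).
Proof.
move=> /andP[m0 m1].
rewrite /gg /dgg.
apply: is_deriveD.
  exact: is_derive1_powR.
have -> : (fun x : R => (1 - x) `^ t) = (fun y : R => y `^ t) \o (fun x : R => 1 - x) by [].
apply: is_derive1_comp.
  by apply: is_derive1_powR; rewrite subr_gt0.
have -> : (-1 : R) = 0 - 1 by rewrite sub0r.
exact: is_deriveB.
Qed.

Lemma mvt_gg (t a b : R) : 0 < a -> a < b -> b < 1 ->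
  exists2 c, a < c < b & gg t b - gg t a = dgg t c * (b - a).
Proof.
move=> a0 ab b1.
have H1 : forall x, x \in `]a, b[%R -> is_derive x 1 (gg t) (dgg t x).
  move=> x; rewrite in_itv /= => /andP[ax xb]; apply: gg_derive.
  by rewrite (lt_trans a0 ax) (lt_trans xb b1).
have H3 : {in `[a, b]%R, forall x, derivable (gg t) x 1}.
  move=> x; rewrite in_itv /= => /andP[ax xb].
  apply: ex_derive; apply: gg_derive.
  by rewrite (lt_le_trans a0 ax) (le_lt_trans xb b1).
have [c cab E] := @MVT R (gg t) (dgg t) a b ab H1 (derivable_within_continuous H3).
by exists c => //; move: cab; rewrite in_itv.
Qed.

Definition Lf (t x : R) := ln 2 + (2 * t - 1) * ln x + (1 - t) * ln (1 - x).

Lemma dgg_sign (t x : R) : 0 < t -> 0 < x < 1 ->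
  (0 < dgg t x -> 0 < Lf t x) /\ (dgg t x < 0 -> Lf t x < 0).
Proof.
move=> t0 /andP[x0 x1].
have x1' : 0 < 1 - x by rewrite subr_gt0.
set A := 2 * x `^ (2 * t - 1).
set B := (1 - x) `^ (t - 1).
have A0 : 0 < A by rewrite mulr_gt0 // powR_gt0.
have B0 : 0 < B by rewrite powR_gt0.
have E : dgg t x = t * (A - B) by rewrite /dgg /A /B; ring.
have EL : Lf t x = ln A - ln B.
  rewrite /Lf /A /B lnM ?posrE ?powR_gt0 // !ln_powR.
  ring.
rewrite E EL; split.
- by rewrite pmulr_rgt0 // !subr_gt0 ltr_ln ?posrE.
- by rewrite pmulr_rlt0 // !subr_lt0 ltr_ln ?posrE.
Qed.

Lemma Lf_concave (t x0 x1 x2 : R) : 1/2 <= t <= 1 -> 0 < x0 -> x0 < x1 -> x1 < x2 -> x2 < 1 ->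
  0 < Lf t x0 -> 0 < Lf t x2 -> 0 < Lf t x1.
Proof.
move=> /andP[th t1] p0 p01 p12 p2 L0 L2.
set l := (x2 - x1) / (x2 - x0).
have d0 : 0 < x2 - x0 by rewrite subr_gt0 (lt_trans p01 p12).
have l0 : 0 < l by rewrite divr_gt0 // subr_gt0.
have l1 : l < 1 by rewrite ltr_pdivrMr // mul1r; lra.
have e1 : x1 = l * x0 + (1 - l) * x2.
  by rewrite /l; field; rewrite gt_eqF.
have e2 : 1 - x1 = l * (1 - x0) + (1 - l) * (1 - x2).
  by rewrite e1; ring.
have c1 := @ln_concave l x0 x2 p0 (lt_trans (lt_trans p0 p01) p12) (ltac:(by rewrite !ltW)).
have c2 := @ln_concave l (1 - x0) (1 - x2) (ltac:(rewrite subr_gt0; lra)) (ltac:(by rewrite subr_gt0)) (ltac:(by rewrite !ltW)).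
rewrite -e1 in c1; rewrite -e2 in c2.
have w1 : 0 <= 2 * t - 1 by lra.
have w2 : 0 <= 1 - t by lra.
have := ler_wpM2l w1 c1; have := ler_wpM2l w2 c2.
move: L0 L2; rewrite /Lf => L0 L2 h2 h1.
have := mulr_gt0 l0 L0; have := mulr_gt0 (ltac:(rewrite subr_gt0; exact l1) : 0 < 1 - l) L2.
nra.
Qed.

Lemma tau_bounds (M : nat) (t : R) : (2 <= M)%N -> 0 < t ->
  (M%:R^-1) `^ (2 * t) + (1 - M%:R^-1) `^ t = 1 -> 1/2 < t < 1.
Proof.
move=> hM t0 heq.
set c := M%:R^-1 in heq *.
have M0 : (0 : R) < M%:R by rewrite ltr0n; case: (M) hM.
have c0 : 0 < c by rewrite invr_gt0.
have c2 : c <= 1/2.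
  rewrite /c mul1r lef_pV2 ?posrE // ?ler_nat //.
have c1 : c < 1 by lra.
have c1' : 0 < 1 - c by lra.
have tl1 : t < 1.
  rewrite ltNge; apply/negP => t1.
  have h1 : c `^ (2 * t) <= c `^ 2.
    by apply: ger_powR; [rewrite c0 ltW | lra].
  have h2 : (1 - c) `^ t <= 1 - c.
    by apply: ge1r_powR => //; rewrite c1' /=; lra.
  have h3 : c `^ 2 = c ^+ 2 by rewrite -powR_mulrn // ltW.
  rewrite h3 in h1.
  have : c ^+ 2 < c by rewrite expr2 gtr_pMr.
  lra.
rewrite tl1 andbT ltNge; apply/negP => th.
have h1 : c <= c `^ (2 * t).
  by apply: ger1_powR; [rewrite c0 ltW | lra].
have h2 : 1 - c < (1 - c) `^ t.
  rewrite /powR gt_eqF // -[X in X < _]lnK ?posrE // ltr_expR.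
  have : ln (1 - c) < 0 by apply: ln_lt0; rewrite c1'; lra.
  nra.
lra.
Qed.

Lemma phi (M : nat) (t : R) : (2 <= M)%N -> 0 < t ->
  (M%:R^-1) `^ (2 * t) + (1 - M%:R^-1) `^ t = 1 ->
  forall m, M%:R^-1 <= m <= 1 -> 1 <= gg t m.
Proof.
move=> hM t0 heq.
have /andP[th t1] := @tau_bounds M t hM t0 heq.
set c := M%:R^-1 in heq *.
have M0 : (0 : R) < M%:R by rewrite ltr0n; case: (M) hM.
have c0 : 0 < c by rewrite invr_gt0.
have c2 : c <= 1/2.
  rewrite /c mul1r lef_pV2 ?posrE // ?ler_nat //.
have c1 : c < 1 by lra.
have gc : gg t c = 1 by [].
set e := (2^-1 : R) `^ ((1 - t)^-1).
have e0 : 0 < e by rewrite powR_gt0.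
have e1 : e <= 2^-1.
  apply: ge1r_powR; first by rewrite invr_gt0 ltr0n /= invf_le1 // ler1n.
  by rewrite invf_ge1; lra.
have Ce : forall m, 1 - e <= m <= 1 -> 1 <= gg t m.
  move=> m /andP[me m1].
  have m0 : 0 < m by lra.
  have hm2 : m ^+ 2 <= m `^ (2 * t).
    rewrite -powR_mulrn; last exact: ltW.
    by apply: ger_powR; [rewrite m0 | lra].
  case: (eqVneq m 1) => [->|mn1].
    by rewrite /gg subrr powR1 powR0 ?gt_eqF // addr0.
  have y0 : 0 < 1 - m by rewrite subr_gt0 lt_neqAle mn1.
  have hy : (1 - m) `^ (1 - t) <= 2^-1.
    have : (1 - m) `^ (1 - t) <= e `^ (1 - t).
      apply: ge0_ler_powR; rewrite ?nnegrE; lra.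
    rewrite -powRrM mulVf ?powRr1 //; last by rewrite gt_eqF // subr_gt0.
  have hy2 : 1 - m = (1 - m) `^ t * (1 - m) `^ (1 - t).
    have e3 : t + (1 - t) = 1 by ring.
    rewrite -powRD; last by rewrite (gt_eqF y0) implybT.
    by rewrite e3 powRr1 // ltW.
  have ht0 : 0 <= (1 - m) `^ t by rewrite powR_ge0.
  have : 1 - m <= (1 - m) `^ t / 2.
    rewrite {1}hy2.
    have : 0 <= (1 - m) `^ t * (2^-1 - (1 - m) `^ (1 - t)).
      by apply: mulr_ge0 => //; rewrite subr_ge0.
    lra.
  rewrite /gg; nra.
set d := Num.min (c / 2) ((t / 2) `^ ((2 * t - 1)^-1)).
have d0 : 0 < d by rewrite lt_min divr_gt0 // powR_gt0 // divr_gt0.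
have [dm1 dm2] : d <= c / 2 /\ d <= (t / 2) `^ ((2 * t - 1)^-1).
  by apply/andP; rewrite -le_min.
have dc : d < c by lra.
have gd : gg t d < 1.
  have hd1 : d `^ (2 * t - 1) <= t / 2.
    have : d `^ (2 * t - 1) <= ((t / 2) `^ ((2 * t - 1)^-1)) `^ (2 * t - 1).
      apply: ge0_ler_powR; rewrite ?nnegrE; [lra | exact: ltW | exact: powR_ge0 | exact: dm2].
    rewrite -powRrM mulVf ?powRr1 //; last by rewrite gt_eqF //; lra.
    by rewrite divr_ge0 // ltW.
  have hd2 : d `^ (2 * t) = d * d `^ (2 * t - 1).
    have e4 : 2 * t = 1 + (2 * t - 1) by ring.
    rewrite {1}e4 powRD; last by rewrite (gt_eqF d0) implybT.
    by rewrite powRr1 // ltW.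
  have hb := @bern t d (ltac:(rewrite ltW //; lra)) (ltac:(rewrite ltW //; lra)).
  rewrite /gg hd2.
  have : d * d `^ (2 * t - 1) <= d * (t / 2) by rewrite ler_wpM2l // ltW.
  nra.
move=> m /andP[cm m1].
rewrite leNgt; apply/negP => gm.
have me : m < 1 - e.
  rewrite ltNge; apply/negP => me; have := Ce m; rewrite me m1 /= => /(_ isT); lra.
have cm' : c < m.
  rewrite lt_neqAle cm andbT; apply/negP => /eqP ecm; move: gm; rewrite -ecm gc; lra.
have [x0 /andP[dx0 x0c] E0] := @mvt_gg t d c d0 dc c1.
have [x1 /andP[cx1 x1m] E1] := @mvt_gg t c m c0 cm' (lt_trans me (ltac:(lra) : 1 - e < 1)).
have [x2 /andP[mx2 x2e] E2] := @mvt_gg t m (1 - e) (lt_trans c0 cm') me (ltac:(lra) : 1 - e < 1).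
have ge : 1 <= gg t (1 - e) by apply: Ce; lra.
have D0 : 0 < dgg t x0.
  have : 0 < dgg t x0 * (c - d) by rewrite -E0; lra.
  have : 0 < c - d by lra.
  nra.
have D1 : dgg t x1 < 0.
  have : dgg t x1 * (m - c) < 0 by rewrite -E1; lra.
  have : 0 < m - c by lra.
  nra.
have D2 : 0 < dgg t x2.
  have : 0 < dgg t x2 * (1 - e - m) by rewrite -E2; lra.
  have : 0 < 1 - e - m by lra.
  nra.
have L0 := (@dgg_sign t _ t0 (ltac:(apply/andP; split; lra) : 0 < x0 < 1)).1 D0.
have L1 := (@dgg_sign t _ t0 (ltac:(apply/andP; split; lra) : 0 < x1 < 1)).2 D1.
have L2 := (@dgg_sign t _ t0 (ltac:(apply/andP; split; lra) : 0 < x2 < 1)).1 D2.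
have := @Lf_concave t x0 x1 x2 (ltac:(apply/andP; split; lra)) (ltac:(lra)) (ltac:(lra)) (ltac:(lra)) (ltac:(lra)) L0 L2.
lra.
Qed.

Lemma step_aux (M : nat) (t : R) : (2 <= M)%N -> 0 < t ->
  (M%:R^-1) `^ (2 * t) + (1 - M%:R^-1) `^ t = 1 ->
  forall P q q' : R, 0 < P -> M%:R^-1 <= q -> q <= q' -> q' <= 1 ->
  P `^ t <= (P * (q * q')) `^ t + (P * (1 - q)) `^ t.
Proof.
move=> hM t0 heq P q q' P0 cq qq q1.
have M0 : (0 : R) < M%:R by rewrite ltr0n; case: (M) hM.
have q0 : 0 < q by apply: lt_le_trans cq; rewrite invr_gt0.
have hg := @phi M t hM t0 heq q (ltac:(by rewrite cq (le_trans qq q1))).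
rewrite /gg in hg.
have e1 : q `^ (2 * t) = q `^ t * q `^ t.
  rewrite -powRD; last by rewrite (gt_eqF q0) implybT.
  by congr (_ `^ _); ring.
have e2 : (q * q) `^ t <= (q * q') `^ t.
  have q'0 : 0 < q' by apply: lt_le_trans qq.
  apply: ge0_ler_powR; rewrite ?nnegrE.
  - exact: ltW.
  - by rewrite mulr_ge0 // ltW.
  - by rewrite mulr_ge0 // ltW.
  - by rewrite ler_wpM2l // ltW.
have hP := ltW P0; have hq := ltW q0; have hq' : 0 <= q' by apply: le_trans qq.
have h1q : 0 <= 1 - q by rewrite subr_ge0 (le_trans qq q1).
rewrite (powRM t hq hq) (powRM t hq hq') in e2.
rewrite (powRM t hP (mulr_ge0 hq hq')) (powRM t hP h1q) (powRM t hq hq').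
rewrite e1 in hg.
have Pt : 0 <= P `^ t by rewrite powR_ge0.
have : P `^ t * 1 <= P `^ t * (q `^ t * q `^ t + (1 - q) `^ t) by rewrite ler_wpM2l.
have : P `^ t * (q `^ t * q `^ t) <= P `^ t * (q `^ t * q' `^ t) by rewrite ler_wpM2l.
nra.
Qed.

Lemma step_real (M : nat) (t : R) : (2 <= M)%N -> 0 < t ->
  (M%:R^-1) `^ (2 * t) + (1 - M%:R^-1) `^ t = 1 ->
  forall X Y a b h : R, 0 < a -> a <= X -> 0 < b -> b <= Y ->
  X <= M%:R * a -> Y <= M%:R * b ->
  (a * b) `^ t + ((X - a) * Y) `^ t <= h ->
  (a * b) `^ t + (X * (Y - b)) `^ t <= h -> (X * Y) `^ t <= h.
Proof.
move=> hM t0 heq X Y a b h a0 aX b0 bY Xa Yb H1 H2.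
have M0 : (0 : R) < M%:R by rewrite ltr0n; case: (M) hM.
have X0 : 0 < X by apply: lt_le_trans aX.
have Y0 : 0 < Y by apply: lt_le_trans bY.
have P0 : 0 < X * Y by rewrite mulr_gt0.
have cx : M%:R^-1 <= a / X.
  rewrite -subr_ge0.
  have -> : a / X - M%:R^-1 = (M%:R * a - X) / (M%:R * X) by field; rewrite !gt_eqF.
  by apply: divr_ge0; [rewrite subr_ge0 | rewrite mulr_ge0 // ltW].
have cy : M%:R^-1 <= b / Y.
  rewrite -subr_ge0.
  have -> : b / Y - M%:R^-1 = (M%:R * b - Y) / (M%:R * Y) by field; rewrite !gt_eqF.
  by apply: divr_ge0; [rewrite subr_ge0 | rewrite mulr_ge0 // ltW].
have x1 : a / X <= 1 by rewrite ler_pdivrMr // mul1r.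
have y1 : b / Y <= 1 by rewrite ler_pdivrMr // mul1r.
case: (leP (a / X) (b / Y)) => xy.
  have := @step_aux M t hM t0 heq (X * Y) (a / X) (b / Y) P0 cx xy y1.
  have -> : X * Y * (a / X * (b / Y)) = a * b by field; rewrite !gt_eqF.
  have -> : X * Y * (1 - a / X) = (X - a) * Y by field; rewrite gt_eqF.
  lra.
have := @step_aux M t hM t0 heq (X * Y) (b / Y) (a / X) P0 cy (ltW xy) x1.
have -> : X * Y * (b / Y * (a / X)) = a * b by field; rewrite !gt_eqF.
have -> : X * Y * (1 - b / Y) = X * (Y - b) by field; rewrite gt_eqF.
lra.
Qed.

End R.

Local Open Scope fset_scope.
Lemma card_sep (T : choiceType) (X : {fset T}) (P : pred T) :
  #|` X| = (#|` [fset x in X | P x]| + #|` [fset x in X | ~~ P x]|)%N.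
Proof.
have e1 : X `&` [fset x in X | P x] = [fset x in X | P x].
  by apply/fsetP => x; rewrite !inE; case: (x \in X); case: (P x).
have e2 : X `\` [fset x in X | P x] = [fset x in X | ~~ P x].
  by apply/fsetP => x; rewrite !inE; case: (x \in X); case: (P x).
by rewrite -(cardfsID [fset x in X | P x] X) e1 e2.
Qed.

Definition sumZ (I J : {fset int}) : {fset int} := [fset (i + j)%R | i in I, j in J].

Lemma seq_max (s : seq int) : s != [::] -> exists2 m, m \in s & forall x, x \in s -> x <= m.
Proof.
elim: s => // a s IH _.
case: (eqVneq s [::]) => [->|sn].
  by exists a; rewrite ?inE // => x; rewrite inE => /eqP ->.
have [m ms Hm] := IH sn.
case: (leP a m) => am.
  by exists m; rewrite ?inE ?ms ?orbT // => x; rewrite inE => /orP[/eqP ->|/Hm].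
exists a; rewrite ?inE ?eqxx // => x; rewrite inE => /orP[/eqP ->//|/Hm xm].
by apply: (le_trans xm); apply: ltW.
Qed.

Lemma CD (n : nat) : forall (I J : {fset int}), #|` I| = n.+1 -> J != fset0 ->
  (#|` J| + n <= #|` sumZ I J|)%N.
Proof.
elim: n => [|n IH] I J cI J0.
  move/eqP/cardfs1P: cI => [i ->].
  rewrite addn0 /sumZ.
  have -> : [fset (x + j)%R | x in [fset i], j in J] = [fset (i + j)%R | j in J].
    apply/fsetP => z; apply/imfset2P/imfsetP => [[x /fset1P -> [j jJ ->]]|[j jJ ->]].
      by exists j.
    by exists i; rewrite ?inE //; exists j.
  rewrite card_in_imfset // => x y _ _ /= /addrI.
  done.
have I0 : (I : seq int) != [::].
  by apply/eqP => e; move: cI; rewrite e.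
have [m mI Hm] := seq_max I0.
have J0' : (J : seq int) != [::].
  apply/eqP => e; move/negP: J0; apply; apply/eqP/fsetP => x.
  by rewrite inE; apply/negbTE; rewrite -[x \in J]/(x \in (J : seq int)) e.
have [mj mjJ Hmj] := seq_max J0'.
set I' := I `\ m.
have cI' : #|` I'| = n.+1.
  by move: cI; rewrite (cardfsD1 m I) mI add1n => -[].
have := IH I' J cI' J0.
have sub : sumZ I' J `<=` (sumZ I J `\ (m + mj)%R).
  apply/fsubsetP => z /imfset2P [i iI' [j jJ ->]].
  move: iI'; rewrite !inE => /andP[im iI].
  apply/andP; split; last by apply/imfset2P; exists i => //; exists j.
  have h1 : i < m by rewrite lt_neqAle im Hm.
  have h2 : j <= mj by apply: Hmj.
  by rewrite neq_lt; apply/orP; left; apply: ltr_leD.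
move/fsubset_leq_card: sub.
rewrite (cardfsD1 (m + mj)%R (sumZ I J)).
have -> : (m + mj)%R \in sumZ I J by apply/imfset2P; exists m => //; exists mj.
move=> h1 h2; rewrite add1n in h1 *.
rewrite addnS; apply: leq_trans h1; exact: h2.
Qed.

Lemma exists_argmax (s : seq int) (F : int -> nat) (P : pred int) :
  (exists2 x, x \in s & P x) ->
  exists x, [/\ x \in s, P x & forall y, y \in s -> P y -> (F y <= F x)%N].
Proof.
elim: s => [[x]//|a s IH [x xs Px]].
case: (boolP (has P s)) => [/hasP [y ys Py]|hn].
  have [z [zs Pz Hz]] := IH (ex_intro2 _ _ y ys Py).
  case: (boolP (P a)) => Pa; last first.
    exists z; split; rewrite ?inE ?zs ?orbT // => w; rewrite inE => /orP[/eqP ->|/Hz //].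
    by rewrite (negbTE Pa).
  case: (leqP (F a) (F z)) => h.
    exists z; split; rewrite ?inE ?zs ?orbT // => w; rewrite inE => /orP[/eqP -> //|/Hz //].
  exists a; split; rewrite ?inE ?eqxx // => w; rewrite inE => /orP[/eqP -> //|ws Pw].
  by apply: leq_trans (Hz w ws Pw) (ltnW h).
have Pa : P a.
  move: xs; rewrite inE => /orP[/eqP <- //|xs].
  by move/hasPn: hn => /(_ x xs); rewrite Px.
exists a; split; rewrite ?inE ?eqxx // => w; rewrite inE => /orP[/eqP -> //|ws Pw].
by move/hasPn: hn => /(_ w ws); rewrite Pw.
Qed.

Section Comb.
Variables (r M : nat) (i : 'I_r).
Notation V := 'rV[int]_r.
Definition crd (v : V) : int := v ord0 i.
Definition fib (A : {fset V}) (k : int) : {fset V} := [fset a in A | crd a == k].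
Definition out (A : {fset V}) (S : {fset int}) : {fset V} := [fset a in A | crd a \notin S].
Definition upper (A : {fset V}) (S : {fset int}) :=
  forall x y, x \in S -> y \notin S -> (#|` fib A y| <= #|` fib A x|)%N.

Lemma cube_crd (A : {fset V}) : {subset A <= cube r M} -> forall a, a \in A -> 0 <= crd a < M%:Z.
Proof. by move=> hA a /hA /forallP /(_ i). Qed.

Lemma count_fib (X : {fset V}) n :
  #|` [fset x in X | (0 <= crd x) && (crd x < n%:Z)]| = (\sum_(k < n) #|` fib X k%:Z|)%N.
Proof.
elim: n => [|n IH].
  rewrite big_ord0; apply/eqP; rewrite cardfs_eq0; apply/eqP/fsetP => x.
  by rewrite !inE; case: (x \in X); case: (leP 0 (crd x)) => //= h; apply/negbTE; rewrite -leNgt.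
set Y := [fset x in X | (0 <= crd x) && (crd x < n.+1%:Z)].
rewrite big_ord_recr /= -IH (card_sep Y (fun x => crd x == n%:Z)) addnC.
have e1 : [fset x in Y | crd x == n%:Z] = fib X n%:Z.
  apply/fsetP => x; rewrite !inE.
  case: (x \in X) => //=; case: (eqVneq (crd x) n%:Z) => [->|ne] /=; rewrite ?andbT ?andbF //.
  by rewrite ?ltz_nat ?ltnS ?leqnn.
have e2 : [fset x in Y | crd x != n%:Z] = [fset x in X | (0 <= crd x) && (crd x < n%:Z)].
  apply/fsetP => x; rewrite !inE.
  case: (x \in X) => //=; case: (eqVneq (crd x) n%:Z) => [->|ne] /=; rewrite ?andbT ?andbF //.
  by apply/idP/idP => /andP[h1 h2]; apply/andP; split => //; lia.
by rewrite e1 e2.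
Qed.

Lemma out_bound (A : {fset V}) (S : {fset int}) (a0 : nat) :
  {subset A <= cube r M} ->
  (forall k : 'I_M, k%:Z \notin S -> (#|` fib A k%:Z| <= a0)%N) ->
  (#|` out A S| <= M * a0)%N.
Proof.
move=> hA H.
have e : out A S = [fset x in out A S | (0 <= crd x) && (crd x < M%:Z)].
  apply/fsetP => x; rewrite !inE; case xA: (x \in A) => //=.
  by case: (crd x \in S) => //=; rewrite (cube_crd hA xA).
rewrite e count_fib -[M in (M * a0)%N]card_ord -sum_nat_const.
apply: leq_sum => k _.
case kS: (k%:Z \in S).
  suff -> : fib (out A S) k%:Z = fset0 by rewrite cardfs0.
  apply/fsetP => x; rewrite !inE; case: (x \in A) => //=.
  by case: (eqVneq (crd x) k%:Z) => [->|]; rewrite ?kS ?andbF.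
apply: leq_trans (H k (negbT kS)).
apply: fsubset_leq_card; apply/fsubsetP => x; rewrite !inE.
by case: (x \in A) => //= /andP[_ ->].
Qed.

End Comb.

Section K1.
Variables (r M : nat) (i : 'I_r).
Notation V := 'rV[int]_r.

Lemma memS (A : {fset V}) : {subset A <= cube r M} ->
  forall a, a \in A -> crd i a \in [seq k%:Z | k <- iota 0 M].
Proof.
move=> hA a aA; have /andP[h1 h2] := cube_crd i hA aA.
apply/mapP; exists (absz (crd i a)); first by rewrite mem_iota add0n; lia.
lia.
Qed.

Lemma choose (A : {fset V}) (S : {fset int}) : {subset A <= cube r M} ->
  out i A S != fset0 ->
  exists x, [/\ x \notin S, (0 < #|` fib i A x|)%N,
     forall y, y \notin S -> (#|` fib i A y| <= #|` fib i A x|)%N &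
     (#|` out i A S| <= M * #|` fib i A x|)%N].
Proof.
move=> hA ne.
case: (fset_0Vmem (out i A S)) => [E|[a0 a0in]]; first by rewrite E eqxx in ne.
move: a0in; rewrite !inE => /andP[a0A a0S].
have [x [xs xS xmax]] := exists_argmax (fun k => #|` fib i A k|)
  (ex_intro2 (fun x => x \in [seq k%:Z | k <- iota 0 M]) (fun x => x \notin S) _ (memS hA a0A) a0S).
have hmax : forall y, y \notin S -> (#|` fib i A y| <= #|` fib i A x|)%N.
  move=> y yS; case: (boolP (y \in [seq k%:Z | k <- iota 0 M])) => ys; first exact: xmax.
  suff -> : fib i A y = fset0 by rewrite cardfs0.
  apply/fsetP => z; rewrite !inE; case zA: (z \in A) => //=.
  by apply/negP => /eqP e; move: ys; rewrite -e (memS hA zA).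
exists x; split => //.
- apply: leq_trans (hmax _ a0S).
  rewrite cardfs_gt0; apply/eqP => E.
  have : a0 \in fib i A (crd i a0) by rewrite !inE a0A eqxx.
  by rewrite E inE.
- apply: out_bound hA _ => k kS; exact: hmax.
Qed.

Lemma card_out_step (A : {fset V}) (S : {fset int}) x : x \notin S ->
  #|` out i A S| = (#|` fib i A x| + #|` out i A (x |` S)|)%N.
Proof.
move=> xS; rewrite (card_sep (out i A S) (fun z => crd i z == x)).
have e1 : [fset z in out i A S | crd i z == x] = fib i A x.
  apply/fsetP => z; rewrite !inE.
  by case: (eqVneq (crd i z) x) => [->|]; rewrite ?xS ?andbT ?andbF.
have e2 : [fset z in out i A S | crd i z != x] = out i A (x |` S).
  apply/fsetP => z; rewrite !inE.
  by case: (eqVneq (crd i z) x) => [->|]; rewrite ?xS ?andbT ?andbF.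
by rewrite e1 e2.
Qed.

Lemma upper_step (A : {fset V}) (S : {fset int}) x : upper i A S -> x \notin S ->
  (forall y, y \notin S -> (#|` fib i A y| <= #|` fib i A x|)%N) ->
  upper i A (x |` S).
Proof.
move=> uA xS hx u v; rewrite !inE => /orP[/eqP ->|uS]; rewrite negb_or => /andP[_ vS].
  exact: hx.
exact: uA.
Qed.

Lemma sumset_fib_sub (A B : {fset V}) x y :
  sumset (fib i A x) (fib i B y) `<=` fib i (sumset A B) (x + y).
Proof.
apply/fsubsetP => z /imfset2P [a + [b + ->]]; rewrite !inE => /andP[aA /eqP ax] /andP[bB /eqP bx].
rewrite /crd mxE -/(crd i a) -/(crd i b) ax bx eqxx andbT.
by apply/imfset2P; exists a => //; exists b.
Qed.

End K1.

Lemma pow_mono (R : realType) (t : R) (x y x' y' : nat) : 0 <= t -> (x <= x')%N -> (y <= y')%N ->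
  ((x%:R * y%:R) `^ t <= (x'%:R * y'%:R) `^ t :> R).
Proof.
move=> t0 hx hy; apply: ge0_ler_powR; rewrite ?nnegrE ?mulr_ge0 ?ler0n //.
by apply: ler_pM; rewrite ?ler0n ?ler_nat.
Qed.


Lemma arith1 (X' Y a n : nat) : (0 < a)%N -> (a + X' + Y <= n.+1)%N -> (X' + Y <= n)%N.
Proof. lia. Qed.
Lemma arith2 (X Y' b n : nat) : (0 < b)%N -> (X + (b + Y') <= n.+1)%N -> (X + Y' <= n)%N.
Proof. lia. Qed.
Lemma arith3 (u s tt : nat) (bb : bool) : (u <= s + tt)%N -> (bb + u <= s.+1 + tt)%N.
Proof. case: bb => /=; lia. Qed.
Lemma arith4 (u s tt : nat) (bb : bool) : (u <= s + tt)%N -> (bb + u <= s + tt.+1)%N.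
Proof. case: bb => /=; lia. Qed.
Lemma arith5 (u s tt z : nat) : (u <= s + tt)%N -> (tt.+1 + s <= z)%N -> ~ (z <= u)%N.
Proof. lia. Qed.

Section K.
Variables (R : realType) (r M : nat) (t : R) (i : 'I_r).
Hypotheses (hM : (2 <= M)%N) (t0 : 0 < t)
  (heq : ((M%:R^-1) `^ (2 * t) + (1 - M%:R^-1) `^ t = 1)%R).
Variables (A B : {fset 'rV[int]_r}).
Hypotheses (hA : {subset A <= cube r M}) (hB : {subset B <= cube r M}).
Hypothesis H1 : forall x y : int,
  ((#|` fib i A x|)%:R * (#|` fib i B y|)%:R) `^ t
    <= (#|` sumset (fib i A x) (fib i B y)|)%:R :> R.

Lemma K n : forall S T U : {fset int},
  (#|` out i A S| + #|` out i B T| <= n)%N -> upper i A S -> upper i B T ->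
  (#|` U| <= #|` S| + #|` T|)%N ->
  ((#|` out i A S|)%:R * (#|` out i B T|)%:R) `^ t
    <= (#|` out i (sumset A B) U|)%:R :> R.
Proof.
elim: n => [|n IHn] S T U hn uA uB hU.
  have -> : #|` out i A S| = 0%N by move: hn; rewrite leqn0 addn_eq0 => /andP[/eqP].
  by rewrite mul0r powR0 ?gt_eqF // ler0n.
case: (eqVneq (out i A S) fset0) => [E|neA].
  by rewrite E cardfs0 mul0r powR0 ?gt_eqF // ler0n.
case: (eqVneq (out i B T) fset0) => [E|neB].
  by rewrite E cardfs0 mulr0 powR0 ?gt_eqF // ler0n.
have [x [xS apos xmax XMa]] := choose hA neA.
have [y [yT bpos ymax YMb]] := choose hB neB.
have eX := card_out_step i A xS.
have eY := card_out_step i B yT.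
have cI : #|` x |` S| = (#|` S|).+1 by rewrite cardfsU1 xS.
have cJ : #|` y |` T| = (#|` T|).+1 by rewrite cardfsU1 yT.
have J0 : (y |` T) != fset0.
  apply/eqP => E; have : y \in y |` T by rewrite !inE eqxx.
  by rewrite E inE.
have hcd := CD cI J0.
have nsub : ~~ (sumZ (x |` S) (y |` T) `<=` U).
  by apply/negP => /fsubset_leq_card; rewrite cJ in hcd; apply: arith5 hU hcd.
have [s0 s0in s0U] := fsubsetPn _ _ nsub.
move/imfset2P: s0in => [i0 i0I [j0 j0J es0]].
have ha : (#|` fib i A x| <= #|` fib i A i0|)%N.
  by move: i0I; rewrite !inE => /orP[/eqP -> // | i0S]; exact: uA i0 x i0S xS.
have hb : (#|` fib i B y| <= #|` fib i B j0|)%N.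
  by move: j0J; rewrite !inE => /orP[/eqP -> // | j0T]; exact: uB j0 y j0T yT.
have eC := card_out_step i (sumset A B) s0U.
have hfC : ((#|` fib i A x|)%:R * (#|` fib i B y|)%:R) `^ t
    <= (#|` fib i (sumset A B) s0|)%:R :> R.
  apply: le_trans (pow_mono (ltW t0) ha hb) _.
  apply: le_trans (H1 i0 j0) _.
  rewrite ler_nat es0; exact: fsubset_leq_card (sumset_fib_sub i A B i0 j0).
have m1 : (#|` out i A (x |` S)| + #|` out i B T| <= n)%N.
  by apply: arith1 apos _; rewrite -eX.
have m2 : (#|` out i A S| + #|` out i B (y |` T)| <= n)%N.
  by apply: arith2 bpos _; rewrite -eY.
have u1 : (#|` s0 |` U| <= #|` x |` S| + #|` T|)%N.
  by rewrite cardfsU1 cI; apply: arith3.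
have u2 : (#|` s0 |` U| <= #|` S| + #|` y |` T|)%N.
  by rewrite cardfsU1 cJ; apply: arith4.
have IH1 := IHn (x |` S) T (s0 |` U) m1 (upper_step uA xS xmax) uB u1.
have IH2 := IHn S (y |` T) (s0 |` U) m2 uA (upper_step uB yT ymax) u2.
rewrite eC natrD.
apply: (@step_real R M t hM t0 heq (#|` out i A S|%:R) (#|` out i B T|%:R)
  (#|` fib i A x|%:R) (#|` fib i B y|%:R)).
- by rewrite ltr0n.
- by rewrite ler_nat eX leq_addr.
- by rewrite ltr0n.
- by rewrite ler_nat eY leq_addr.
- by rewrite -natrM ler_nat.
- by rewrite -natrM ler_nat.
- rewrite eX natrD addrAC subrr add0r; exact: lerD hfC IH1.
- rewrite eY natrD addrAC subrr add0r; exact: lerD hfC IH2.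
Qed.
End K.

Lemma fib_le (r : nat) (i : 'I_r) (A : {fset 'rV[int]_r}) x : (#|` fib i A x| <= #|` A|)%N.
Proof. by apply: fsubset_leq_card; apply/fsubsetP => z; rewrite !inE => /andP[]. Qed.

Lemma fib_lt (r : nat) (i : 'I_r) (A : {fset 'rV[int]_r}) a a' x :
  a \in A -> a' \in A -> crd i a != crd i a' -> (#|` fib i A x| < #|` A|)%N.
Proof.
move=> aA a'A ne.
rewrite (card_sep A (fun z => crd i z == x)) -/(fib i A x) -[X in (X < _)%N]addn0 ltn_add2l.
rewrite cardfs_gt0; apply/negP => /eqP E.
case: (eqVneq (crd i a) x) => [ex|nx].
  have : a' \in [fset z in A | crd i z != x] by rewrite !inE a'A -ex eq_sym ne.
  by rewrite E inE.
have : a \in [fset z in A | crd i z != x] by rewrite !inE aA nx.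
by rewrite E inE.
Qed.

Lemma diff_coord (r : nat) (a a' : 'rV[int]_r) : a != a' -> exists i, crd i a != crd i a'.
Proof.
move=> ne.
have : [exists i, crd i a != crd i a'].
  case E: [exists i, crd i a != crd i a'] => //.
  move/negbT: E; rewrite negb_exists => /forallP H.
  case/negP: ne; apply/eqP/rowP => j.
  by move: (H j); rewrite negbK => /eqP.
by move/existsP.
Qed.

Section Main.
Variables (R : realType) (r M : nat) (t : R).
Hypotheses (hM : (2 <= M)%N) (t0 : 0 < t)
  (heq : ((M%:R^-1) `^ (2 * t) + (1 - M%:R^-1) `^ t = 1)%R).

Lemma main_ind n : forall A B : {fset 'rV[int]_r}, (#|` A| + #|` B| <= n)%N ->
  {subset A <= cube r M} -> {subset B <= cube r M} ->
  ((#|` A|)%:R * (#|` B|)%:R) `^ t <= (#|` sumset A B|)%:R :> R.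
Proof.
elim: n => [|n IHn] A B hn hA hB.
  have -> : #|` A| = 0%N by move: hn; rewrite leqn0 addn_eq0 => /andP[/eqP].
  by rewrite mul0r powR0 ?gt_eqF // ler0n.
case: (fset_0Vmem A) => [->|[a0 a0A]].
  by rewrite cardfs0 mul0r powR0 ?gt_eqF // ler0n.
case: (fset_0Vmem B) => [->|[b0 b0B]].
  by rewrite cardfs0 mulr0 powR0 ?gt_eqF // ler0n.
have Kapp : forall i : 'I_r,
    (forall x y, (#|` fib i A x| + #|` fib i B y| < #|` A| + #|` B|)%N) ->
    ((#|` A|)%:R * (#|` B|)%:R) `^ t <= (#|` sumset A B|)%:R :> R.
  move=> i Hlt.
  have H1 : forall x y : int,
      ((#|` fib i A x|)%:R * (#|` fib i B y|)%:R) `^ t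
        <= (#|` sumset (fib i A x) (fib i B y)|)%:R :> R.
    move=> x y; apply: IHn.
    - by rewrite -ltnS; apply: leq_trans (Hlt x y) hn.
    - by move=> z; rewrite !inE => /andP[/hA].
    - by move=> z; rewrite !inE => /andP[/hB].
  have eo : forall X : {fset 'rV[int]_r}, out i X fset0 = X.
    by move=> X; apply/fsetP => z; rewrite !inE andbT.
  have uA : upper i A fset0 by move=> u v; rewrite inE.
  have uB : upper i B fset0 by move=> u v; rewrite inE.
  have hn0 : (#|` out i A fset0| + #|` out i B fset0| <= #|` A| + #|` B|)%N by rewrite !eo.
  have HK := @K R r M t i hM t0 heq A B hA hB H1 (#|` A| + #|` B|) fset0 fset0 fset0
    hn0 uA uB (ltac:(by rewrite cardfs0)).
  by rewrite !eo in HK.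
case: (boolP (has (fun a => a != a0) A)) => [/hasP [a1 a1A ne]|hA1].
  have [i hi] := diff_coord ne.
  apply: (Kapp i) => x y; rewrite -addSn; apply: leq_add (fib_le i B y).
  exact: fib_lt a1A a0A hi.
case: (boolP (has (fun b => b != b0) B)) => [/hasP [b1 b1B ne]|hB1].
  have [i hi] := diff_coord ne.
  apply: (Kapp i) => x y; rewrite -addnS; apply: leq_add (fib_le i A x) _.
  exact: fib_lt b1B b0B hi.
have eA : A = [fset a0].
  apply/fsetP => z; rewrite inE; apply/idP/idP => [zA|/eqP ->//].
  by move/hasPn: hA1 => /(_ z zA); rewrite negbK.
have eB : B = [fset b0].
  apply/fsetP => z; rewrite inE; apply/idP/idP => [zB|/eqP ->//].
  by move/hasPn: hB1 => /(_ z zB); rewrite negbK.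
have eC : sumset A B = [fset (a0 + b0)%R].
  rewrite eA eB; apply/fsetP => z; rewrite inE; apply/imfset2P/eqP.
    by move=> [a /fset1P -> [b /fset1P -> ->]].
  by move=> ->; exists a0; rewrite ?inE //; exists b0; rewrite ?inE.
by rewrite eC eA eB !cardfs1 mulr1 powR1.
Qed.

End Main.

Local Close Scope fset_scope.

Theorem theorem5 (R : realType) (r M : nat) (hr : (0 < r)%N) (hM : (2 <= M)%N)
  (tau : R) (htau : 0 < tau)
  (heq : (M%:R^-1) `^ (2 * tau) + ((M - 1)%:R / M%:R) `^ tau = 1)
  (A B : {fset 'rV[int]_r})
  (hA : {subset A <= cube r M}) (hB : {subset B <= cube r M}) :
  (#|` A|%:R * #|` B|%:R) `^ tau <= (#|` sumset A B|%:R : R).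
Proof.
have e : ((M - 1)%:R / M%:R : R) = 1 - M%:R^-1.
  have M0 : (M%:R : R) != 0 by rewrite pnatr_eq0 -lt0n; case: (M) hM.
  rewrite natrB; last by case: (M) hM.
  by field.
rewrite e in heq.
exact: (@main_ind R r M tau hM htau heq (#|` A| + #|` B|) A B (leqnn _) hA hB).
Qed.
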